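(* For every integer $n\ge1$ and all $u,x,y,z\in\mathbb{C}((t^{1/n}))$ satisfying $x^2-tu^2+t=(u^2t^2-t)y^2\neq0$ and $x^2-2tu^2+t^{-1}=t(u^2t^2-t)z^2\neq0$, the element $u^2t^2-t$ is a square in $\mathbb{C}((t^{1/n}))$. *)

(* Defs.v *)
(* Formal Laurent series C((s)) over a ring C, where
   C((t^{1/n})) is realized as C((s)) with s = t^{1/n}, i.e. t = s^n. *)
From HB Require Import structures.
From mathcomp Require Import all_boot all_order all_algebra.
From mathcomp Require Export reals complex.
Set Implicit Arguments. Unset Strict Implicit. Unset Printing Implicit Defensive.
Import Order.TTheory GRing.Theory Num.Theory.
Local Open Scope ring_scope.

Section Laurent.
Variable C : nzRingType.

Record laurent := Laurent {
  lcoef : int -> C ;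
  lval : int ;
  lcoefP : forall m : int, m < lval -> lcoef m = 0 }.

Definition leq_ser (a b : laurent) : Prop := forall m, lcoef a m = lcoef b m.
Definition lnonzero (a : laurent) : Prop := exists m, lcoef a m != 0.

Lemma ladd_proof (a b : laurent) : forall m : int,
  m < Order.min (lval a) (lval b) -> lcoef a m + lcoef b m = 0.
Proof.
move=> m; rewrite lt_min => /andP[ha hb].
by rewrite (lcoefP ha) (lcoefP hb) addr0.
Qed.
Definition ladd (a b : laurent) : laurent :=
  @Laurent (fun m => lcoef a m + lcoef b m) (Order.min (lval a) (lval b)) (@ladd_proof a b).

Lemma lopp_proof (a : laurent) : forall m : int, m < lval a -> - lcoef a m = 0.
Proof. by move=> m h; rewrite (lcoefP h) oppr0. Qed.
Definition lopp (a : laurent) : laurent :=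
  @Laurent (fun m => - lcoef a m) (lval a) (@lopp_proof a).

Definition lsub a b := ladd a (lopp b).

(* Cauchy product: coefficient m is sum over i + j = m with i >= lval a, j >= lval b *)
Definition lmul_coef (a b : laurent) (m : int) : C := if m < lval a + lval b then 0 else
     \sum_(i < (absz (m - lval a - lval b)%R).+1)
        lcoef a (lval a + i%:Z) * lcoef b (m - lval a - i%:Z).
Lemma lmul_proof (a b : laurent) : forall m : int,
  m < lval a + lval b -> lmul_coef a b m = 0.
Proof. by move=> m h; rewrite /lmul_coef h. Qed.
Definition lmul (a b : laurent) : laurent :=
  @Laurent (lmul_coef a b) (lval a + lval b) (@lmul_proof a b).

Lemma lmono_proof (k : int) : forall m : int, m < k -> ((m == k)%:R : C) = 0.
Proof. by move=> m h; rewrite lt_eqF. Qed.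
Definition lmono (k : int) : laurent :=
  @Laurent (fun m => (m == k)%:R) k (@lmono_proof k).

Lemma lconst_proof (c : C) : forall m : int, m < 0 -> (if m == 0 then c else 0) = 0.
Proof. by move=> m h; rewrite lt_eqF. Qed.
Definition lconst (c : C) : laurent :=
  @Laurent (fun m => if m == 0 then c else 0) 0 (@lconst_proof c).

Definition lsq a := lmul a a.

Definition lis_square (a : laurent) : Prop := exists w, leq_ser (lsq w) a.

End Laurent.

(* Main.v *)
Require Import Defs.
From HB Require Import structures.
From mathcomp Require Import all_boot all_order all_algebra.
From mathcomp Require Import reals complex zify ring.
From Stdlib Require Import Classical_Prop.
Import Order.TTheory GRing.Theory Num.Theory.
Local Open Scope ring_scope.
Set Implicit Arguments. Unset Strict Implicit.

Section Val.
Variable C : idomainType.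
Implicit Types a b : laurent C.

Definition zb a (p : int) := forall m, m < p -> lcoef a m = 0.

Lemma zb_le a p q : zb a p -> q <= p -> zb a q.
Proof. by move=> h hq m hm; apply: h; apply: lt_le_trans hm hq. Qed.

Lemma zb_lval a : zb a (lval a).
Proof. by move=> m; apply: lcoefP. Qed.

Lemma lmul_coefE a b m : lcoef (lmul a b) m = lmul_coef a b m.
Proof. by []. Qed.

Lemma term0 a b p q m (j : int) : zb a p -> zb b q -> m < p + q ->
  lcoef a j * lcoef b (m - j) = 0.
Proof.
move=> ha hb hm; case: (ltP j p) => hj; first by rewrite (ha _ hj) mul0r.
by rewrite (hb (m - j)) ?mulr0 //; lia.
Qed.

Lemma term1 a b p q (j : int) : zb a p -> zb b q -> j != p ->
  lcoef a j * lcoef b (p + q - j) = 0.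
Proof.
move=> ha hb hj; case: (ltP j p) => hj'; first by rewrite (ha _ hj') mul0r.
by rewrite (hb (p + q - j)) ?mulr0 //; lia.
Qed.

Lemma lmul_zb a b p q : zb a p -> zb b q -> zb (lmul a b) (p + q).
Proof.
move=> ha hb m hm; rewrite lmul_coefE /lmul_coef; case: ifP => // _.
apply: big1 => i _.
have -> : m - lval a - i%:Z = m - (lval a + i%:Z) by lia.
exact: term0 ha hb hm.
Qed.

Lemma term2 a b p q (j : int) : zb a p -> zb b q ->
  lcoef a j * lcoef b (p + q - j) = if j == p then lcoef a p * lcoef b q else 0.
Proof.
move=> ha hb; case: eqP => [->|/eqP hj]; last exact: term1.
by have -> : p + q - p = q by lia.
Qed.

Lemma lmul_lead a b p q : zb a p -> zb b q ->
  lcoef (lmul a b) (p + q) = lcoef a p * lcoef b q.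
Proof.
move=> ha hb; rewrite lmul_coefE /lmul_coef.
have Hz : (p < lval a) || (q < lval b) -> lcoef a p * lcoef b q = 0.
  case/orP => h; first by rewrite (lcoefP h) mul0r.
  by rewrite (lcoefP h) mulr0.
case: ifP => hlt.
  by rewrite Hz //; apply/orP; case: (ltP p (lval a)); [left|right]; lia.
have E : forall i : 'I_(absz (p + q - lval a - lval b)%R).+1,
   lcoef a (lval a + i%:Z) * lcoef b (p + q - lval a - i%:Z) =
   if (lval a + i%:Z) == p then lcoef a p * lcoef b q else 0.
  move=> i; rewrite -term2 //; congr (_ * lcoef b _); lia.
rewrite (eq_bigr _ (fun i _ => E i)).
case hpq: ((p < lval a) || (q < lval b)).
  by rewrite Hz //; apply: big1 => i _; case: ifP; rewrite ?Hz.
move/negbT: hpq; rewrite negb_or -!leNgt => /andP[hp hq].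
have hi0 : (absz (p - lval a)%R < (absz (p + q - lval a - lval b)%R).+1)%N by lia.
rewrite (bigD1 (Ordinal hi0)) //= ifT; last by apply/eqP; lia.
rewrite big1 ?addr0 // => i /negP hi; case: ifP => // /eqP h; exfalso; apply: hi.
by apply/eqP/val_inj => /=; lia.
Qed.

Lemma val_uniq a p q : zb a p -> lcoef a p != 0 -> zb a q -> lcoef a q != 0 -> p = q.
Proof.
move=> hp np hq nq; case: (ltgtP p q) => // h.
  by rewrite (hq _ h) eqxx in np.
by rewrite (hp _ h) eqxx in nq.
Qed.

Lemma val_ex a : lnonzero a -> exists p, zb a p /\ lcoef a p != 0.
Proof.
case=> m0 hm0.
have hge : lval a <= m0 by case: (ltP m0 (lval a)) => // h; rewrite (lcoefP h) eqxx in hm0.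
have ex : exists j : nat, lcoef a (lval a + j%:Z) != 0.
  by exists (absz (m0 - lval a)); have -> : lval a + (absz (m0 - lval a))%:Z = m0 by lia.
case: (ex_minnP ex) => j hj hmin; exists (lval a + j%:Z); split => // m hm.
case: (ltP m (lval a)) => h; first exact: lcoefP.
apply/eqP; apply: contraT => hne.
have := hmin (absz (m - lval a)); have -> : lval a + (absz (m - lval a))%:Z = m by lia.
by move=> /(_ hne); lia.
Qed.

Lemma zero_or_val a : (forall m, lcoef a m = 0) \/ exists p, zb a p /\ lcoef a p != 0.
Proof.
case: (classic (lnonzero a)) => h; first by right; apply: val_ex.
left => m; apply/eqP; apply: contraT => hm; exfalso; apply: h; by exists m.
Qed.

End Val.

Section Sqrt.
Variable C : numClosedFieldType.
Variables (A : laurent C) (k : int).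
Hypothesis hz : forall m, m < k + k -> lcoef A m = 0.
Hypothesis hc : lcoef A (k + k) != 0.

Let h (j : nat) := lcoef A (k + k + j%:Z).
Let r := sqrtC (h 0).
Let next (s : seq C) (J : nat) :=
  (h J.+1 - \sum_(i < J) s`_i.+1 * s`_(J - i)) / (2 * r).
Fixpoint G (j : nat) : seq C :=
  match j with 0 => [:: r] | J.+1 => rcons (G J) (next (G J) J) end.
Let g j := (G j)`_j.

Lemma size_G j : size (G j) = j.+1.
Proof. by elim: j => //= j IH; rewrite size_rcons IH. Qed.

Lemma G_prefix i j : (i <= j)%N -> (G j)`_i = g i.
Proof.
elim: j => [|j IH]; first by rewrite leqn0 => /eqP ->.
rewrite leq_eqVlt => /orP[/eqP -> //|hi].
by rewrite /= nth_rcons size_G hi IH.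
Qed.

Lemma g_rec J : g J.+1 = next (G J) J.
Proof. by rewrite /g /= nth_rcons size_G ltnn eqxx. Qed.

Lemma r_neq0 : r != 0.
Proof. by rewrite /r sqrtC_eq0 /h addr0. Qed.

Lemma conv j : \sum_(i < j.+1) g i * g (j - i)%N = h j.
Proof.
case: j => [|J].
  by rewrite big_ord1 /g /= -expr2 sqrtCK.
rewrite big_ord_recl big_ord_recr /= subn0 subnn.
have -> : \sum_(i < J) g (bump 0 (widen_ord (leqnSn J) i)) * g (J.+1 - bump 0 (widen_ord (leqnSn J) i))%N
        = \sum_(i < J) (G J)`_i.+1 * (G J)`_(J - i).
  apply: eq_bigr => i _; rewrite /bump /= add1n subSS.
  by rewrite !G_prefix // ?leq_subr.
rewrite g_rec /next /g /=.
have h2 : 2 * r != 0 by rewrite mulf_neq0 ?r_neq0 ?pnatr_eq0.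
field; exact: r_neq0.
Qed.

Lemma w_proof : forall m : int, m < k -> (if k <= m then g (absz (m - k)) else 0) = 0.
Proof. by move=> m hm; rewrite leNgt hm. Qed.

Definition wser := @Laurent C (fun m => if k <= m then g (absz (m - k)) else 0) k w_proof.

Lemma sq_exists : lis_square A.
Proof.
exists wser => m; rewrite /lsq /= /lmul_coef /=.
case: ifP => hm; first by rewrite hz.
rewrite -[RHS]/(lcoef A m).
have -> : lcoef A m = h (absz (m - k - k)%R) by rewrite /h; congr lcoef; lia.
rewrite -conv; apply: eq_bigr => i _.
have hi := ltn_ord i.
rewrite ifT; last by lia.
rewrite ifT; last by lia.
congr (g _ * g _); lia.
Qed.
End Sqrt.

Section Main.
Variable C : idomainType.
Implicit Types a b : laurent C.

Lemma mul_zeroL a b : (forall m, lcoef a m = 0) -> forall m, lcoef (lmul a b) m = 0.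
Proof.
move=> h m; apply: (@lmul_zb _ a b (m - lval b + 1) (lval b)).
- by move=> ? _; apply: h.
- exact: zb_lval.
- lia.
Qed.

Lemma mul_zeroR a b : (forall m, lcoef b m = 0) -> forall m, lcoef (lmul a b) m = 0.
Proof.
move=> h m; apply: (@lmul_zb _ a b (lval a) (m - lval a + 1)).
- exact: zb_lval.
- by move=> ? _; apply: h.
- lia.
Qed.

Lemma val_mul a b p q : zb a p -> lcoef a p != 0 -> zb b q -> lcoef b q != 0 ->
  zb (lmul a b) (p + q) /\ lcoef (lmul a b) (p + q) != 0.
Proof.
move=> ha na hb nb; split; first exact: lmul_zb.
by rewrite lmul_lead // mulf_neq0.
Qed.

Lemma val_tr a b p : leq_ser a b -> zb a p -> lcoef a p != 0 ->
  zb b p /\ lcoef b p != 0.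
Proof. by move=> H ha na; split; [move=> m hm; rewrite -H; apply: ha|rewrite -H]. Qed.

Lemma zb_mono k : zb (lmono C k) k.
Proof. by move=> m hm /=; rewrite lt_eqF. Qed.

Lemma lsubE a b m : lcoef (lsub a b) m = lcoef a m - lcoef b m.
Proof. by []. Qed.
Lemma laddE a b m : lcoef (ladd a b) m = lcoef a m + lcoef b m.
Proof. by []. Qed.

Lemma nz_of a : lnonzero a -> ~ (forall m, lcoef a m = 0).
Proof. by case=> m hm h; rewrite h eqxx in hm. Qed.
End Main.

Theorem lemma9p1 (R : realType) (n : nat) (hn : (1 <= n)%N)
  (u x y z : laurent (complex R)) :
  let t := lmono (complex R) n%:Z in
  let tinv := lmono (complex R) (- n%:Z) in
  let two := lconst 2%:R in
  let A := lsub (lmul (lsq u) (lsq t)) t in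
  leq_ser (ladd (lsub (lsq x) (lmul t (lsq u))) t) (lmul A (lsq y)) ->
  lnonzero (lmul A (lsq y)) ->
  leq_ser (ladd (lsub (lsq x) (lmul (lmul two t) (lsq u))) tinv)
          (lmul t (lmul A (lsq z))) ->
  lnonzero (lmul t (lmul A (lsq z))) ->
  lis_square A.
Proof.
move=> t tinv two A H1 N1 H2 N2.
have [A0|[al [zA nA]]] := zero_or_val A.
  by exfalso; apply: (nz_of N1); apply: mul_zeroL.
have [Y0|[be [zY nY]]] := zero_or_val y.
  by exfalso; apply: (nz_of N1); apply: mul_zeroR; apply: mul_zeroL.
have [Z0|[ga [zZ nZ]]] := zero_or_val z.
  by exfalso; apply: (nz_of N2); apply: mul_zeroR; apply: mul_zeroR; apply: mul_zeroL.
case: (classic (exists k, al = k + k)) => [[k hk]|nev].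
  by subst al; exact: (sq_exists zA nA).
exfalso.
have zt : zb t n%:Z := @zb_mono _ n%:Z.
have nt : lcoef t n%:Z != 0 by rewrite /= eqxx oner_eq0.
have [zYY nYY] := val_mul zY nY zY nY.
have [zZZ nZZ] := val_mul zZ nZ zZ nZ.
have [zR1 nR1] := val_mul zA nA zYY nYY.
have [zR2' nR2'] := val_mul zA nA zZZ nZZ.
have [zR2 nR2] := val_mul zt nt zR2' nR2'.
have hT : zb (lmul t (lsq u)) 0 /\ zb (lmul (lmul two t) (lsq u)) 0.
  have [U0|[a [zU nU]]] := zero_or_val u.
    by split => m _; apply: mul_zeroR; apply: mul_zeroL.
  have [zUU nUU] := val_mul zU nU zU nU.
  have z2 : zb two 0 by move=> m hm /=; rewrite lt_eqF.
  case: (ltP (n%:Z + (a + a)) 0) => ha.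
    have [ztt ntt] := val_mul zt nt zt nt.
    have [zP nP] := val_mul zUU nUU ztt ntt.
    have zA' : zb A (a + a + (n%:Z + n%:Z)).
      move=> m hm; rewrite /A lsubE zP //.
      rewrite (zt m); last by clear -hm ha; lia. by rewrite subr0.
    have nA' : lcoef A (a + a + (n%:Z + n%:Z)) != 0.
      rewrite /A lsubE (zt (a + a + (n%:Z + n%:Z))); last by clear -ha; lia.
      by rewrite subr0.
    have hal := val_uniq zA nA zA' nA'; exfalso; apply: nev.
    exists (a + n%:Z); rewrite hal; clear; lia.
  split.
    by apply: (zb_le (lmul_zb zt zUU)); clear -ha; lia.
  by apply: (zb_le (lmul_zb (lmul_zb z2 zt) zUU)); clear -ha; lia.
case: hT => zT1 zT2.
have zti : zb tinv (- n%:Z) := @zb_mono _ (- n%:Z).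
have case1 : zb (lsq x) (- n%:Z + 1) -> False.
  move=> zXX.
  have zE2 : zb (ladd (lsub (lsq x) (lmul (lmul two t) (lsq u))) tinv) (- n%:Z).
    move=> m hm; rewrite laddE lsubE zXX; last by clear -hm; lia.
    rewrite zT2; last by clear -hm; lia.
    by rewrite zti // subr0 add0r.
  have nE2 : lcoef (ladd (lsub (lsq x) (lmul (lmul two t) (lsq u))) tinv) (- n%:Z) != 0.
    rewrite laddE lsubE zXX; last by clear; lia.
    rewrite zT2; last by clear -hn; lia.
    by rewrite subr0 add0r /= eqxx oner_eq0.
  have [zF nF] := val_tr H2 zE2 nE2.
  have hal := val_uniq zF nF zR2 nR2.
  apply: nev; exists (- n%:Z - ga); clear -hal; lia.
have [X0|[c [zX nX]]] := zero_or_val x.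
  by apply: case1 => m _; apply: mul_zeroL.
have [zXX nXX] := val_mul zX nX zX nX.
case: (ltP (- n%:Z) (c + c)) => hc.
  by apply: case1; apply: (zb_le zXX); clear -hc; lia.
have zE1 : zb (ladd (lsub (lsq x) (lmul t (lsq u))) t) (c + c).
  move=> m hm; rewrite laddE lsubE (zXX m hm).
  rewrite zT1; last by clear -hm hc hn; lia.
  by rewrite zt ?subr0 ?add0r //; clear -hm hc hn; lia.
have nE1 : lcoef (ladd (lsub (lsq x) (lmul t (lsq u))) t) (c + c) != 0.
  rewrite laddE lsubE zT1; last by clear -hc hn; lia.
  by rewrite zt ?subr0 ?addr0 //; clear -hc hn; lia.
have [zF nF] := val_tr H1 zE1 nE1.
have hal := val_uniq zF nF zR1 nR1.
apply: nev; exists (c - be); clear -hal; lia.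
Qed.
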